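(* Let $H$ be a propositional formula in conjunctive normal form (a finite set of clauses) over the finite set of variables $\mathrm{Vars}(H)$. Then $H$ is unsatisfiable if and only if $H$ has a Stable Set of Assignments (SSA), i.e., there exist a set $P$ of (full) assignments to $\mathrm{Vars}(H)$, an assignment $\vec{p}_{init} \in P$, and an AC-mapping $\Phi: P \to H$ such that for every $\vec{p} \in P$, $\mathrm{Nbhd}(\vec{p}_{init},\vec{p},\Phi(\vec{p})) \subseteq P$.
   Context: A clause is a disjunction of literals; a CNF formula $H$ is identified with its set of clauses $\{C_1,\dots,C_k\}$ and $\mathrm{Vars}(H)$ denotes its set of variables. Assignments are full assignments to $\mathrm{Vars}(H)$. For an assignment $\vec{p}$ falsifying a clause $C$, $\mathrm{Nbhd}(\vec{p},C)$ is the set of assignments that satisfy $C$ and are at Hamming distance 1 from $\vec{p}$ (equivalently, obtained from $\vec{p}$ by flipping the value of one variable of $C$). For another assignment $\vec{q}$, $\mathrm{Nbhd}(\vec{q},\vec{p},C)$ is the subset of $\mathrm{Nbhd}(\vec{p},C)$ consisting of those assignments whose Hamming distance to $\vec{q}$ is strictly greater than that of $\vec{p}$. An AC-mapping for a set $P$ of assignments each of which falsifies $H$ is a map $\Phi$ assigning to each $\vec{p}\in P$ a clause $\Phi(\vec{p})$ of $H$ falsified by $\vec{p}$ (so in particular every assignment in an SSA falsifies $H$). The assignment $\vec{p}_{init}$ is called the center of the SSA. *)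

(* Defs.v *)
From mathcomp Require Import all_boot.
Set Implicit Arguments. Unset Strict Implicit. Unset Printing Implicit Defensive.

Section CNF.
Variable V : finType.

(* A literal is a pair (variable, polarity): (v, true) is v, (v, false) is ~v. *)
Definition lit := (V * bool)%type.
Definition clause := {set lit}.
Definition cnf := {set clause}.
Definition assignment := {ffun V -> bool}.

Definition lit_sat (p : assignment) (l : lit) : bool := p l.1 == l.2.
Definition clause_sat (p : assignment) (C : clause) : bool :=
  [exists l in C, lit_sat p l].
Definition cnf_sat (p : assignment) (H : cnf) : bool :=
  [forall C in H, clause_sat p C].
Definition satisfiable (H : cnf) : Prop := exists p, cnf_sat p H.

Definition Vars (H : cnf) : {set V} :=
  [set v | [exists C in H, [exists b, (v, b) \in C]]].

Definition hamming (p q : assignment) : nat := #|[set v | p v != q v]|.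

Definition Nbhd (p : assignment) (C : clause) : {set assignment} :=
  [set q | clause_sat q C & hamming p q == 1].

(* Nbhd(q, p, C): those elements of Nbhd(p, C) strictly farther from q than p. *)
Definition Nbhd_from (q p : assignment) (C : clause) : {set assignment} :=
  [set r in Nbhd p C | hamming q p < hamming q r].

Definition is_SSA (H : cnf) (P : {set assignment}) (pinit : assignment)
    (Phi : assignment -> clause) : Prop :=
  [/\ pinit \in P,
      (forall p, p \in P -> Phi p \in H /\ ~~ clause_sat p (Phi p)) &
      (forall p, p \in P -> Nbhd_from pinit p (Phi p) \subset P)].

End CNF.

(* Main.v *)
Require Import Defs.
From mathcomp Require Import all_boot.

Set Implicit Arguments.
Section Aux.
Variable V : finType.

Definition flip (p : assignment V) (v : V) : assignment V :=
  [ffun w => if w == v then ~~ p v else p w].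

Lemma flip_ham1 (p : assignment V) v : hamming p (flip p v) = 1.
Proof.
rewrite /hamming -(cards1 v); apply: eq_card => w.
rewrite !inE ffunE; case: (w =P v) => [->|_]; first by case: (p v).
by rewrite eqxx.
Qed.

Lemma flip_far (q p : assignment V) v : p v = q v -> hamming q (flip p v) = (hamming q p).+1.
Proof.
move=> Hv; rewrite /hamming.
have -> : [set w | q w != flip p v w] = v |: [set w | q w != p w].
  apply/setP=> w; rewrite !inE ffunE; case: (w =P v) => [->|_] /=.
    by rewrite -Hv; case: (p v).
  by [].
by rewrite cardsU1 inE Hv eqxx.
Qed.

Lemma flip_close (s p : assignment V) v : p v != s v -> hamming (flip p v) s < hamming p s.
Proof.
move=> Hv; rewrite /hamming (cardsD1 v [set w | p w != s w]) inE Hv add1n ltnS.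
apply: subset_leq_card; apply/subsetP=> w; rewrite !inE ffunE.
case: (w =P v) => [->|_] /=; last by [].
by move: Hv; case: (p v); case: (s v).
Qed.

End Aux.

Theorem proposition1 (V : finType) (H : cnf V) :
  Vars H = [set: V] ->
  (~ satisfiable H <->
   exists (P : {set assignment V}) (pinit : assignment V)
          (Phi : assignment V -> clause V), is_SSA H P pinit Phi).
Proof.
move=> _; split.
- move=> unsat.
  exists [set: assignment V], [ffun=> true],
    (fun p => odflt set0 [pick C in H | ~~ clause_sat p C]).
  split; first by rewrite inE.
  + move=> p _; case: pickP => [C /andP[HC nC] //|none].
    exfalso; apply: unsat; exists p; apply/forallP=> C; apply/implyP=> HC.
    by have := none C; rewrite HC /= => /negbT; rewrite negbK.
  + by move=> p _; apply/subsetP=> r; rewrite inE.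
- case=> P [pinit [Phi [Pi HPhi HN]]] [s Hs].
  pose B p := (p \in P) && [forall w, (pinit w == s w) ==> (p w == s w)].
  have B0 : B pinit by rewrite /B Pi; apply/forallP=> w; apply/implyP.
  case: (arg_minnP (fun p => hamming p s) B0) => p /andP[Pp Bp] Pmin.
  have [HC nC] := HPhi p Pp.
  have : clause_sat s (Phi p) by move/forallP: Hs => /(_ (Phi p)); rewrite HC.
  case/existsP=> [[v b]] /andP[lC]; rewrite /lit_sat /= => /eqP sv.
  have pv : p v != s v.
    apply/negP=> /eqP e; move/negP: nC; apply; apply/existsP; exists (v, b).
    by rewrite lC /lit_sat /= e sv.
  have pvi : p v = pinit v.
    move/forallP: Bp => /(_ v); case: (pinit v =P s v) => [e|ne] /=.
      by move/eqP=> e'; rewrite e' in pv; rewrite eqxx in pv.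
    by move: pv ne; case: (p v); case: (s v); case: (pinit v).
  have rN : flip p v \in Nbhd_from pinit p (Phi p).
    rewrite !inE flip_ham1 (@flip_far _ _ _ _ pvi) ltnSn !andbT.
    apply/existsP; exists (v, b); rewrite lC /lit_sat /= ffunE eqxx -sv.
    by move: pv; case: (p v); case: (s v).
  have rP : flip p v \in P by move/subsetP: (HN p Pp); apply.
  have rB : B (flip p v).
    rewrite /B rP; apply/forallP=> w; apply/implyP=> e; rewrite ffunE.
    move: e; case: (w =P v) => [->|_] e; last by move/forallP: Bp => /(_ w); rewrite e.
    by move: e; rewrite -pvi (negbTE pv).
  by have := Pmin _ rB; rewrite leqNgt flip_close.
Qed.
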